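(* A pseudo-Kleene lattice $\mathbf A$ is super-paraorthomodular if and only if it satisfies the identity $(x\lor y)\land(x\lor x')\approx x\lor((x\lor y)\land x')$.
   Context: A pseudo-Kleene lattice is an algebra $(A,\land,\lor,{}',0,1)$ that is a bounded lattice with an antitone involution ${}'$ ($x\leq y\Rightarrow y'\leq x'$, $x''=x$) satisfying $x\land x'\leq y\lor y'$. It is super-paraorthomodular if for all $x,y$: (SP1) $x\leq y$ and $x'\land y=(x\land x')\lor(y\land y')$ imply $y\land(x\lor x')=x\lor(y\land y')$; (SP2) $x\leq y$ implies $(x\land x')\lor(y\land y')=(x'\land y)\land(x'\land y)'$. *)

(* Defs.v *)
From mathcomp Require Import all_boot all_order.
Set Implicit Arguments. Unset Strict Implicit. Unset Printing Implicit Defensive.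
Import Order.TTheory.
Local Open Scope order_scope.

Definition pseudo_Kleene {d} {L : tbLatticeType d} (inv : L -> L) : Prop :=
  (forall x y : L, x <= y -> inv y <= inv x) /\
  (forall x : L, inv (inv x) = x) /\
  (forall x y : L, x `&` inv x <= y `|` inv y).

Definition super_paraorthomodular {d} {L : tbLatticeType d} (inv : L -> L)
  : Prop :=
  (forall x y : L, x <= y ->
     inv x `&` y = (x `&` inv x) `|` (y `&` inv y) ->
     y `&` (x `|` inv x) = x `|` (y `&` inv y)) /\
  (forall x y : L, x <= y ->
     (x `&` inv x) `|` (y `&` inv y) = (inv x `&` y) `&` inv (inv x `&` y)).

Definition SP_identity {d} {L : tbLatticeType d} (inv : L -> L) : Prop :=
  forall x y : L, (x `|` y) `&` (x `|` inv x) = x `|` ((x `|` y) `&` inv x).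

(* Main.v *)
Require Import Defs.
From mathcomp Require Import all_boot all_order.
Import Order.TTheory.
Local Open Scope order_scope.

Ltac lat := first [ done
 | (rewrite leUx; apply/andP; split; lat)
 | (rewrite lexI; apply/andP; split; lat)
 | (apply: leIxl; lat) | (apply: leIxr; lat)
 | (apply: lexUl; lat) | (apply: lexUr; lat) ].

Ltac eqlat := apply/le_anti; apply/andP; split; lat.

Lemma inv_join {d} {L : tbLatticeType d} (inv : L -> L) :
  pseudo_Kleene inv -> forall x y, inv (x `|` y) = inv x `&` inv y.
Proof.
move=> [anti [invK _]] x y; apply/le_anti/andP; split.
  by rewrite lexI; apply/andP; split; eapply anti; lat.
rewrite -[inv x `&` inv y]invK; eapply anti.
rewrite leUx; apply/andP; split.
  by rewrite -{1}[x]invK; eapply anti; lat.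
by rewrite -{1}[y]invK; eapply anti; lat.
Qed.

Lemma inv_meet {d} {L : tbLatticeType d} (inv : L -> L) :
  pseudo_Kleene inv -> forall x y, inv (x `&` y) = inv x `|` inv y.
Proof.
move=> pk x y; have [_ [invK _]] := pk.
by rewrite -[x]invK -[y]invK -inv_join // !invK.
Qed.

Lemma D_lemma {d} {L : tbLatticeType d} (inv : L -> L) :
  pseudo_Kleene inv -> super_paraorthomodular inv ->
  forall q p : L, q <= p -> p `&` (q `|` inv p) <= q `|` (p `&` inv p).
Proof.
move=> pk [SP1 SP2] q p qp.
have [anti [invK _]] := pk.
have invI := inv_meet inv pk; have invU := inv_join inv pk.
set b := p `&` (q `|` inv p).
have qb : q <= b by rewrite /b; lat.
have h1 := SP2 q p qp.
have k1 : inv q `&` b <= (q `&` inv q) `|` (p `&` inv p).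
  by rewrite h1 invI invK /b; lat.
have ipb : inv p <= inv b by eapply anti; rewrite /b; lat.
have k2 : inv q `&` b <= q `|` inv b.
  apply: le_trans k1 _; rewrite leUx; apply/andP; split.
    by apply: lexUl; apply: leIl.
  by apply: lexUr; apply: le_trans ipb; apply: leIr.
have hyp : inv q `&` b = (q `&` inv q) `|` (b `&` inv b).
  by rewrite (SP2 q b qb) invI invK (meet_l k2).
have conc := SP1 q b qb hyp.
have bq : b <= q `|` inv q.
  rewrite /b; apply: leIxr; rewrite leUx; apply/andP; split; first lat.
  by apply: lexUr; eapply anti.
rewrite (meet_l bq) in conc.
rewrite conc leUx; apply/andP; split; first lat.
have : b `&` inv b <= inv q `&` b by rewrite hyp; lat.
move/le_trans/(_ k1) => H; apply: le_trans H _.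
rewrite leUx; apply/andP; split; lat.
Qed.

Theorem theorem3p5 (d : Order.disp_t) (L : tbLatticeType d) (inv : L -> L) :
  pseudo_Kleene inv ->
  (super_paraorthomodular inv <-> SP_identity inv).
Proof.
move=> pk; have [anti [invK kl]] := pk.
have invI := inv_meet inv pk; have invU := inv_join inv pk.
split.
- move=> SP.
  have Ir : forall x y : L, x <= y ->
      y `&` (x `|` inv x) = x `|` (y `&` inv x).
    move=> x y xy.
    set u := x `|` (y `&` inv x); set v := y `&` (x `|` inv x).
    apply/le_anti/andP; split; last by rewrite /u /v; lat.
    have ivy : inv y <= inv v by eapply anti; rewrite /v; lat.
    have h2 := SP.2 x y xy.
    have s1 : v <= u `|` inv v.
      have : v <= inv ((inv x `&` y) `&` inv (inv x `&` y)).
        by rewrite -h2 invU !invI !invK /v; lat.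
      move/le_trans; apply.
      rewrite invI invK invI invK /u.
      rewrite !leUx; apply/andP; split; [apply/andP; split|].
      + lat.
      + by apply: lexUr.
      + lat.
    have uv : u <= v by rewrite /u /v; lat.
    have s2 := @D_lemma _ _ inv pk SP u v.
    have s3 : v `&` inv v <= u.
      have ixv : inv v <= inv x by eapply anti; rewrite /v; lat.
      apply: (@le_trans _ _ (y `&` inv x)); last by rewrite /u; lat.
      apply: leI2 => //; rewrite /v; lat.
    have := s2 uv; rewrite (meet_l s1) => s4.
    apply: le_trans s4 _; rewrite leUx; apply/andP; split => //.
  move=> x y; rewrite Ir //; lat.
- move=> id.
  have Ir : forall x y : L, x <= y ->
      y `&` (x `|` inv x) = x `|` (y `&` inv x).
    by move=> x y xy; have := id x y; rewrite (join_r xy).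
  have Dr : forall x y : L, x <= y ->
      inv y `|` (inv x `&` x) = inv x `&` (inv y `|` x).
    move=> x y xy; have := congr1 inv (Ir x y xy).
    by rewrite !(invI, invU, invK).
  split.
  + move=> x y xy H; rewrite Ir // meetC H joinA (join_l (leIl x (inv x))).
    done.
  + move=> x y xy.
    have iyx : inv y <= inv x by eapply anti.
    have E1 := Dr x y xy.
    have E2 := Dr (inv y) (x `|` inv x) (lexUr _ iyx).
    rewrite invU !invK in E2.
    rewrite invI invK.
    have -> : (inv x `&` y) `&` (x `|` inv y) = y `&` (inv x `&` (inv y `|` x)).
      eqlat.
    rewrite -E1 (joinC (inv y)) -E2; eqlat.
Qed.
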